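(* For every integer $n\ge0$, the formal power series $\left(\frac{x^2}{1-x}\right)^n\in\mathbb{C}[[x]]$ is symplectic.
   Context: A formal power series $\varphi(x)=\sum_{i\ge0}\gamma_i x^i\in\mathbb{C}[[x]]$ is called symplectic if for every $m\ge1$ one has $\sum_{k=0}^{m-1}(-1)^k\binom{m-1}{k}\gamma_{m+k}=0$. *)

(* Defs.v *)
From HB Require Import structures.
From mathcomp Require Import all_boot all_order all_algebra.
From mathcomp Require Import reals.
From mathcomp Require Import complex.
Set Implicit Arguments. Unset Strict Implicit. Unset Printing Implicit Defensive.
Import Order.TTheory GRing.Theory Num.Theory.
Local Open Scope ring_scope.

(* Formal power series over a commutative ring K, represented by their
   coefficient sequences: phi = \sum_i phi i x^i. *)
Definition fps (K : Type) := nat -> K.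

Section FPS.
Variable K : comRingType.

Definition fps_const (c : K) : fps K := fun i => if i == 0%N then c else 0.
Definition fps_X : fps K := fun i => if i == 1%N then 1 else 0.
Definition fps_add (f g : fps K) : fps K := fun i => f i + g i.
Definition fps_sub (f g : fps K) : fps K := fun i => f i - g i.
Definition fps_mul (f g : fps K) : fps K :=
  fun m => \sum_(i < m.+1) f i * g (m - i)%N.
Fixpoint fps_pow (f : fps K) (n : nat) : fps K :=
  match n with
  | 0%N => fps_const 1
  | n'.+1 => fps_mul (fps_pow f n') f
  end.

Definition symplectic (phi : fps K) : Prop :=
  forall m : nat, (1 <= m)%N ->
    \sum_(k < m) (-1) ^+ k * ('C(m.-1, k))%:R * phi (m + k)%N = 0.

End FPS.

(* Main.v *)
Require Import Defs.
From HB Require Import structures.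
From mathcomp Require Import all_boot all_order all_algebra.
From mathcomp Require Import reals.
From mathcomp Require Import complex.
From mathcomp Require Import zify.
From Stdlib Require Import FunctionalExtensionality.
Import Order.TTheory GRing.Theory Num.Theory.
Local Open Scope ring_scope.

Section Aux.
Variable K : comRingType.

Definition SS (f : fps K) (a j : nat) : K :=
  \sum_(k < a.+1) (-1) ^+ k * ('C(a, k))%:R * f (j + k)%N.

Lemma SS_pascal f a j : SS f a.+1 j = SS f a j - SS f a j.+1.
Proof.
rewrite /SS big_ord_recl /= addn0 expr0 bin0 mul1r.
under eq_bigr => i _ do rewrite /bump /= add1n binS natrD exprS mulrDr mulrDl
  addnS -addSn.
rewrite big_split /=.
have -> : \sum_(i < a.+1) (-1) ^+ i * ('C(a, i))%:R * f (j.+1 + i)%N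
  = - \sum_(i < a.+1) - 1 * (-1) ^+ i * ('C(a, i))%:R * f (j.+1 + i)%N.
  by rewrite -sumrN; apply: eq_bigr => i _; rewrite !mulN1r !mulNr opprK.
rewrite opprK mul1r addrA; congr (_ + _).
rewrite [in LHS]big_ord_recr /= bin_small // mulr0n mulr0 mul0r addr0.
rewrite [in RHS]big_ord_recl /= addn0 expr0 bin0 mul1r; congr (_ + _); first by rewrite mul1r.
apply: eq_bigr => i _; rewrite /bump /= add1n addnS exprS.
by rewrite -addSn.
Qed.

Lemma SS_diff f a j : SS f a j - SS f a j.+1 = SS (fun i => f i - f i.+1) a j.
Proof.
rewrite /SS -sumrB; apply: eq_bigr => i _.
by rewrite addSn mulrBr.
Qed.

Lemma SS_ext f g a j : (forall k, (k <= a)%N -> f (j + k)%N = g (j + k)%N) ->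
  SS f a j = SS g a j.
Proof. by move=> H; apply: eq_bigr => i _; rewrite H // -ltnS. Qed.

Definition phi2 : fps K := fun i => (2 <= i)%N%:R.

Lemma mul_phi2 f i : fps_mul f phi2 i.+1 = \sum_(k < i) f k.
Proof.
rewrite /fps_mul big_ord_recr /= subnn /phi2 /= mulr0 addr0.
case: i => [|i].
  by rewrite big_ord_recr !big_ord0 /= mulr0 addr0.
rewrite big_ord_recr /= subSnn /= mulr0 addr0.
apply: eq_bigr => k _.
have hk := ltn_ord k.
have -> : (1 < i.+2 - k)%N by lia.
by rewrite mulr1.
Qed.

Lemma pow_diff n i :
  fps_pow phi2 n.+1 i.+1 - fps_pow phi2 n.+1 i.+2 = - fps_pow phi2 n i.
Proof.
rewrite /= !mul_phi2 big_ord_recr /=.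
by rewrite opprD addrA subrr add0r.
Qed.

Lemma pow_one n : fps_pow phi2 n 1 = 0.
Proof. by case: n => [|n] //=; rewrite mul_phi2 big_ord0. Qed.

Lemma SS_pow a : forall n, SS (fps_pow phi2 n) a a.+1 = 0.
Proof.
elim: a => [|a IH] n.
  by rewrite /SS big_ord_recl big_ord0 addn0 pow_one !mulr0 addr0.
rewrite SS_pascal SS_diff.
case: n => [|n].
  rewrite /SS big1 // => i _.
  by rewrite /= /fps_const /= subrr mulr0.
rewrite (@SS_ext _ (fun i => - fps_pow phi2 n i.-1)); last first.
  by move=> k _; rewrite addSn pow_diff.
rewrite -[RHS]oppr0 -(IH n) /SS -sumrN; apply: eq_bigr => i _.
by rewrite mulrN.
Qed.

Lemma mulX f m : fps_mul f (fps_X K) m = if m is m'.+1 then f m' else 0.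
Proof.
rewrite /fps_mul; case: m => [|m].
  by rewrite big_ord_recr big_ord0 /= /fps_X /= mulr0 addr0.
have X0 : fps_X K 0 = 0 by [].
have X1 : fps_X K 1 = 1 by [].
rewrite big_ord_recr /= subnn X0 mulr0 addr0 big_ord_recr /= subSnn X1 mulr1.
rewrite big1 ?add0r // => i _; have hi := ltn_ord i.
rewrite /fps_X.
rewrite ifF ?mulr0 //; apply/eqP; lia.
Qed.

Lemma mul1 (g : fps K) m : fps_mul (fps_const 1) g m = g m.
Proof.
rewrite /fps_mul big_ord_recl /= subn0 mul1r big1 ?addr0 // => i _.
by rewrite /fps_const /= mul0r.
Qed.

Lemma X2 m : fps_pow (fps_X K) 2 m = (m == 2)%N%:R.
Proof.
rewrite /= mulX; case: m => [//|m]; rewrite mulX; case: m => [//|m].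
by case: m.
Qed.

Lemma mul1X (f : fps K) m : fps_mul (fps_sub (fps_const 1) (fps_X K)) f m =
  if m is m'.+1 then f m - f m' else f 0.
Proof.
rewrite /fps_mul; case: m => [|m].
  by rewrite big_ord_recl big_ord0 /fps_sub /fps_const /fps_X /= subr0 mul1r addr0.
rewrite big_ord_recl big_ord_recl /= /fps_sub /fps_const /fps_X /= subr0 sub0r mul1r.
rewrite big1 ?addr0 ?mulN1r ?subn0 /bump /= ?subSS ?subn0 //.
by move=> i _; rewrite /bump /= subrr mul0r.
Qed.

End Aux.

Theorem lemma2p1 (R : realType) (phi : fps R[i])
  (hphi : fps_mul (fps_sub (fps_const 1) (fps_X R[i])) phi
          = fps_pow (fps_X R[i]) 2) :
  forall n : nat, symplectic (fps_pow phi n).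
Proof.
have Hphi : phi = phi2 R[i].
  apply: functional_extensionality => m.
  have H := fun m => f_equal (fun g => g m) hphi.
  elim: m => [|m IH].
    by move: (H 0%N); rewrite mul1X X2.
  move: (H m.+1); rewrite mul1X X2 IH => /eqP; rewrite subr_eq => /eqP ->.
  rewrite /phi2; case: m {IH H} => [|[|m]] //=; by rewrite ?addr0 ?add0r.
move=> n m; rewrite Hphi; case: m => [//|a] _.
exact: (SS_pow _ a n).
Qed.
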